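(* Let $(a_n)_{n\ge1}$ be a real sequence with $|a_n|\le1$, and let $N_1<N_2<\cdots$ be integers with $\lim_{j\to\infty}\frac1{N_j}\sum_{n=1}^{N_j}|a_n|=\theta>0$. Then there exist a subsequence $(N_{j_t})_{t\ge1}$ and a point $x\in X$ such that for all sufficiently large $t$, $$\frac1{N_{j_t}}\sum_{n=1}^{N_{j_t}}f(\hat T^nx)\,a(n)\ \ge\ \theta\,\tau(N_{j_t}).$$ In particular $\limsup_{N\to\infty}\frac{\frac1N\sum_{n=1}^Nf(\hat T^nx)a(n)}{\tau(N)}>0$.
   Context: Let $\tau:\mathbb N\to(0,\infty)$ be non-increasing with $\tau(n)\to0$. Fix integers $2\le q_1<q_2<\cdots$ such that for every $k\ge1$: (i) $q_{k+1}>q_k^4+3q_k$; (ii) $\tau(\lceil q_{k+1}/3\rceil)<\frac1{16q_k}$. For $k\ge1$ put $q^{(0)}_k=q_{2k}$, $q^{(1)}_k=q_{2k+1}$, $q^{(2)}_k=q^{(0)}_k-1$, $q^{(3)}_k=q^{(1)}_k-1$, and $L^{(i)}_k=\lfloor q^{(i)}_{k+1}/(3q^{(i)}_k)\rfloor$. Let $s^{(i)}_k\in\{-1,0,1\}^{\mathbb N}$ (indices $n\ge1$) be given by $s^{(i)}_k(n)=1$ if $n=jq^{(i)}_k$ with $1\le j\le L^{(i)}_k$, $s^{(i)}_k(n)=-1$ if $n=jq^{(i)}_k$ with $L^{(i)}_k<j\le2L^{(i)}_k$, and $s^{(i)}_k(n)=0$ otherwise. For $w\in\{-1,0,1\}^{\mathbb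 N}$ and $p\in\mathbb N_0$ let $\sigma^{-p}w$ be defined by $(\sigma^{-p}w)(n)=0$ for $1\le n\le p$ and $(\sigma^{-p}w)(n)=w(n-p)$ for $n>p$. For $l\le m$ write $w|_l^m=(w_l,\dots,w_m)$. Let $R^{(i)}_k=\{(\sigma^{-p}s^{(i)}_k)|_{q^{(i)}_k}^{q^{(i)}_{k+1}-1}:p=0,1,\dots,q^{(i)}_k\}$ and $P^{(i)}=\{y\in\{-1,0,1\}^{\mathbb N}: y(n)=0\text{ for }1\le n<q^{(i)}_1,\ y|_{q^{(i)}_k}^{q^{(i)}_{k+1}-1}\in R^{(i)}_k\text{ for all }k\ge1\}$. Let $Z=\{-1,0,1\}^{\mathbb N}\times\{-1,0,1\}^{\mathbb Z}$, where each factor carries the metric $d(u,v)=3^{-\min\{|m|:u_m\neq v_m\}}$ and $Z$ the maximum of the two. $\sigma$ is the left shift $(\sigma u)_m=u_{m+1}$ (invertible on $\{-1,0,1\}^{\mathbb Z}$). Define $T:Z\to Z$, $T(y,z)=(\sigma y,\sigma^{y_1}z)$, and $X_i=\overline{\bigcup_{n\ge0}T^n(P^{(i)}\times\{-1,0,1\}^{\mathbb Z})}$ for $i\in\{0,1,2,3\}$. Let $X=X_0\times X_1\times X_2\times X_3\times\{0,1,2,3\}$ with $\hat T(p^{(0)},p^{(1)},p^{(2)},p^{(3)},i)=(Tp^{(0)},Tp^{(1)},Tp^{(2)},Tp^{(3)},i)$, and $f\in\mathcal C(X)$, $f((y^{(0)},z^{(0)}),(y^{(1)},z^{(1)}),(y^{(2)},z^{(2)}),(y^{(3)},z^{(3)}),i)=z^{(i)}_0$.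 *)

(* Defs.v *)
From Stdlib Require Import Reals ZArith Lia Bool.

Definition trit (v : Z) : Prop := v = (-1)%Z \/ v = 0%Z \/ v = 1%Z.

(* A point of Z = {-1,0,1}^N x {-1,0,1}^Z.  The first component is a
   function nat -> Z of which only the indices n >= 1 are meaningful
   (index 0 is ignored everywhere: by the shift T, by f, and by the topology). *)
Definition Zpt : Type := ((nat -> Z) * (Z -> Z))%type.

Definition Tmap (u : Zpt) : Zpt :=
  (fun n => fst u (S n), fun m => snd u (m + fst u 1%nat)%Z).

Definition qq (q : nat -> nat) (i k : nat) : nat :=
  match i with
  | 0 => q (2 * k)%nat
  | 1 => q (2 * k + 1)%nat
  | 2 => (q (2 * k) - 1)%nat
  | _ => (q (2 * k + 1) - 1)%nat
  end.

Definition LL (q : nat -> nat) (i k : nat) : nat :=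
  (qq q i (S k) / (3 * qq q i k))%nat.

Definition sseq (q : nat -> nat) (i k : nat) (n : nat) : Z :=
  let Q := qq q i k in
  if (1 <=? n)%nat && (n mod Q =? 0)%nat then
    let j := (n / Q)%nat in
    if (1 <=? j)%nat && (j <=? LL q i k)%nat then 1%Z
    else if (LL q i k <? j)%nat && (j <=? 2 * LL q i k)%nat then (-1)%Z
    else 0%Z
  else 0%Z.

Definition shiftR (p : nat) (w : nat -> Z) (n : nat) : Z :=
  if (n <=? p)%nat then 0%Z else w (n - p)%nat.

Definition inR (q : nat -> nat) (i k : nat) (y : nat -> Z) : Prop :=
  exists p : nat, (p <= qq q i k)%nat /\
    forall n : nat, (qq q i k <= n <= qq q i (S k) - 1)%nat ->
      y n = shiftR p (sseq q i k) n.

Definition Pset (q : nat -> nat) (i : nat) (y : nat -> Z) : Prop :=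
  (forall n : nat, (1 <= n)%nat -> trit (y n)) /\
  (forall n : nat, (1 <= n < qq q i 1)%nat -> y n = 0%Z) /\
  (forall k : nat, (1 <= k)%nat -> inR q i k y).

Definition orbitSet (q : nat -> nat) (i : nat) (u : Zpt) : Prop :=
  exists (n : nat) (y : nat -> Z) (z : Z -> Z),
    Pset q i y /\ (forall m : Z, trit (z m)) /\ u = Nat.iter n Tmap (y, z).

(* Closure in Z for the metric max(d,d), d(u,v) = 3^{-min{|m| : u_m <> v_m}}:
   u is in the closure of S iff for every m there is s in S with
   d(u,s) < 3^{-m}, i.e. s agrees with u at all indices of absolute value <= m
   (indices n >= 1 for the first factor). *)
Definition closureZ (S : Zpt -> Prop) (u : Zpt) : Prop :=
  forall m : nat, exists s : Zpt, S s /\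
    (forall n : nat, (1 <= n <= m)%nat -> fst u n = fst s n) /\
    (forall k : Z, (Z.abs k <= Z.of_nat m)%Z -> snd u k = snd s k).

Definition Xi (q : nat -> nat) (i : nat) : Zpt -> Prop := closureZ (orbitSet q i).

Definition Xpt : Type := (Zpt * Zpt * Zpt * Zpt * nat)%type.

Definition inX (q : nat -> nat) (x : Xpt) : Prop :=
  let '(p0, p1, p2, p3, i) := x in
  Xi q 0 p0 /\ Xi q 1 p1 /\ Xi q 2 p2 /\ Xi q 3 p3 /\ (i <= 3)%nat.

Definition That (x : Xpt) : Xpt :=
  let '(p0, p1, p2, p3, i) := x in (Tmap p0, Tmap p1, Tmap p2, Tmap p3, i).

Definition fX (x : Xpt) : R :=
  let '(p0, p1, p2, p3, i) := x in
  IZR (snd (match i with 0 => p0 | 1 => p1 | 2 => p2 | _ => p3 end) 0%Z).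

Fixpoint sum1 (g : nat -> R) (N : nat) : R :=
  match N with
  | O => 0%R
  | S N' => (sum1 g N' + g (S N'))%R
  end.

(* Main.v *)
Require Import Defs.
From Stdlib Require Import Reals ZArith Lia Lra Bool ClassicalEpsilon Classical.

Local Open Scope R_scope.


Fixpoint sm (g : nat -> R) (a len : nat) : R :=
  match len with O => 0 | S l => sm g a l + g (a + l)%nat end.

Lemma sum1_sm g N : sum1 g N = sm g 1 N.
Proof. induction N; simpl; auto. rewrite IHN. reflexivity. Qed.

Lemma sm_split g a l1 l2 : sm g a (l1 + l2) = sm g a l1 + sm g (a + l1) l2.
Proof.
  induction l2; simpl.
  - rewrite Nat.add_0_r; ring.
  - rewrite Nat.add_succ_r. simpl. rewrite IHl2. rewrite Nat.add_assoc. ring.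
Qed.

Lemma sm_ext g h a l : (forall n, (a <= n < a + l)%nat -> g n = h n) -> sm g a l = sm h a l.
Proof.
  induction l; intros H; simpl; auto.
  rewrite IHl by (intros; apply H; lia). rewrite H by lia. reflexivity.
Qed.

Lemma sm_le g h a l : (forall n, (a <= n < a + l)%nat -> g n <= h n) -> sm g a l <= sm h a l.
Proof.
  induction l; intros H; simpl; [lra|].
  assert (sm g a l <= sm h a l) by (apply IHl; intros; apply H; lia).
  assert (g (a+l)%nat <= h (a+l)%nat) by (apply H; lia). lra.
Qed.

Lemma sm_scal c g a l : sm (fun n => c * g n) a l = c * sm g a l.
Proof. induction l; simpl; [ring|]. rewrite IHl; ring. Qed.

Lemma sm_plus g h a l : sm (fun n => g n + h n) a l = sm g a l + sm h a l.
Proof. induction l; simpl; [ring|]. rewrite IHl; ring. Qed.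

Lemma sm_const c a l : sm (fun _ => c) a l = INR l * c.
Proof. induction l; simpl sm; [simpl; ring|]. rewrite IHl, S_INR; ring. Qed.

Lemma Rabs_inv x a : Rabs x <= a -> - a <= x <= a.
Proof. intros H. pose proof (Rle_abs x). pose proof (Rle_abs (- x)). rewrite Rabs_Ropp in *. lra. Qed.

Lemma sm_lb g a l : (forall n, (a <= n < a + l)%nat -> Rabs (g n) <= 1) -> - INR l <= sm g a l.
Proof.
  intros H. replace (- INR l) with (sm (fun _ => -1) a l) by (rewrite sm_const; ring).
  apply sm_le. intros n Hn. specialize (H n Hn).
  apply Rabs_inv in H. lra.
Qed.

Lemma sm_ub g a l : (forall n, (a <= n < a + l)%nat -> Rabs (g n) <= 1) -> sm g a l <= INR l.
Proof.
  intros H. replace (INR l) with (sm (fun _ => 1) a l) by (rewrite sm_const; ring).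
  apply sm_le.
  intros n Hn. specialize (H n Hn). apply Rabs_inv in H. lra.
Qed.

Lemma sm_nonneg f a l : (forall n, (a <= n < a + l)%nat -> 0 <= f n) -> 0 <= sm f a l.
Proof.
  intros H. replace 0 with (sm (fun _ => 0) a l) by (rewrite sm_const; ring).
  apply sm_le; auto.
Qed.

Lemma sm_shift0 g c l : sm g c l = sm (fun n => g (c + n)%nat) 0 l.
Proof. induction l; simpl; auto. rewrite IHl. reflexivity. Qed.

Lemma sm_blocks h b Q len :
  sm (fun P => sm (fun t => h (b + P + t * Q)%nat) 0 len) 0 Q = sm h b (len * Q).
Proof.
  induction len.
  - simpl. replace (sm (fun _ => 0) 0 Q) with (INR Q * 0) by (rewrite sm_const; auto). ring.
  - simpl sm at 1. rewrite sm_plus, IHlen.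
    replace (S len * Q)%nat with (len * Q + Q)%nat by lia.
    rewrite sm_split. f_equal. rewrite (sm_shift0 h (b + len * Q)).
    apply sm_ext. intros n Hn. f_equal. lia.
Qed.

Lemma sm_argmax F Q : (1 <= Q)%nat -> exists P, (P < Q)%nat /\ sm F 0 Q <= INR Q * F P.
Proof.
  intros HQ.
  assert (exists P, (P < Q)%nat /\ forall P', (P' < Q)%nat -> F P' <= F P) as [P [HP HM]].
  { induction Q as [|Q IH]; [lia|].
    destruct (Nat.eq_dec Q 0) as [->|HQ0].
    - exists 0%nat. split; [lia|]. intros P' HP'. replace P' with 0%nat by lia. lra.
    - destruct IH as [P [HP HM]]; [lia|].
      destruct (Rle_dec (F Q) (F P)).
      + exists P. split; [lia|]. intros P' HP'.
        destruct (Nat.eq_dec P' Q); [subst; auto|]. apply HM; lia.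
      + exists Q. split; [lia|]. intros P' HP'.
        destruct (Nat.eq_dec P' Q); [subst; lra|]. specialize (HM P' ltac:(lia)). lra. }
  exists P. split; auto. replace (INR Q * F P) with (sm (fun _ => F P) 0 Q) by (rewrite sm_const; ring). apply sm_le. intros. apply HM. lia.
Qed.

Lemma sm_sub f b l A l' : (forall n, 0 <= f n) -> (b <= A)%nat -> (A + l' <= b + l)%nat ->
  sm f A l' <= sm f b l.
Proof.
  intros Hf H1 H2.
  replace l with ((A - b) + (l' + (b + l - (A + l'))))%nat by lia.
  rewrite sm_split, sm_split. replace (b + (A - b))%nat with A by lia.
  assert (0 <= sm f b (A - b)) by (apply sm_nonneg; auto).
  assert (0 <= sm f (A + l') (b + l - (A + l'))) by (apply sm_nonneg; auto).
  lra.
Qed.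

Local Close Scope R_scope.


Ltac bdes :=
  repeat match goal with
  | H : (_ <=? _) = true |- _ => apply Nat.leb_le in H
  | H : (_ <=? _) = false |- _ => apply Nat.leb_gt in H
  | H : (_ <? _) = true |- _ => apply Nat.ltb_lt in H
  | H : (_ <? _) = false |- _ => apply Nat.ltb_ge in H
  | H : (_ =? _) = true |- _ => apply Nat.eqb_eq in H
  | H : (_ =? _) = false |- _ => apply Nat.eqb_neq in H
  end.

Record SH (q : nat -> nat) (i : nat) : Prop := {
  sh_pos : forall k, (1 <= k)%nat -> (2 <= qq q i k)%nat;
  sh_g3 : forall k, (1 <= k)%nat -> (3 * qq q i k + 3 <= qq q i (S k))%nat;
  sh_sq : forall k, (1 <= k)%nat -> (qq q i k * qq q i k <= qq q i (S k))%nat }.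

Lemma qq_mono q i a b : SH q i -> (1 <= a)%nat -> (a <= b)%nat -> (qq q i a <= qq q i b)%nat.
Proof.
  intros H Ha Hab. induction Hab; auto.
  pose proof (sh_g3 q i H m ltac:(lia)). lia.
Qed.

Lemma qq_smono q i a b : SH q i -> (1 <= a)%nat -> (a < b)%nat -> (qq q i a < qq q i b)%nat.
Proof.
  intros H Ha Hab. pose proof (sh_g3 q i H a Ha).
  pose proof (qq_mono q i (S a) b H ltac:(lia) Hab). lia.
Qed.

Lemma qq_ge q i k : SH q i -> (1 <= k)%nat -> (k + 1 <= qq q i k)%nat.
Proof.
  intros H Hk. induction Hk. pose proof (sh_pos q i H 1 ltac:(lia)). lia.
  pose proof (sh_g3 q i H m ltac:(lia)). lia.
Qed.

Lemma LL_le q i k : (3 * qq q i k * LL q i k <= qq q i (S k))%nat.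
Proof. unfold LL. apply Nat.Div0.mul_div_le. Qed.

Lemma LL_gt q i k : (1 <= qq q i k)%nat -> (qq q i (S k) < 3 * qq q i k * (LL q i k + 1))%nat.
Proof.
  intros H. unfold LL. set (d := (3 * qq q i k)%nat).
  pose proof (Nat.div_mod (qq q i (S k)) d ltac:(lia)).
  pose proof (Nat.mod_upper_bound (qq q i (S k)) d ltac:(lia)). nia.
Qed.

Lemma LL_mono q i k : SH q i -> (1 <= k)%nat -> (LL q i k <= LL q i (S k))%nat.
Proof.
  intros H Hk.
  pose proof (LL_le q i k). pose proof (LL_gt q i (S k)).
  pose proof (sh_sq q i H (S k) ltac:(lia)). pose proof (sh_pos q i H k Hk).
  pose proof (sh_pos q i H (S k) ltac:(lia)).
  assert (~ (LL q i (S k) < LL q i k)%nat); [|lia].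
  intros Hc.
  specialize (H1 ltac:(lia)).
  assert (qq q i (S k) * qq q i (S k) < 3 * qq q i (S k) * LL q i k)%nat by nia.
  assert (qq q i (S k) < 3 * LL q i k)%nat by nia.
  nia.
Qed.

Lemma LL_ge q i k : SH q i -> (1 <= k)%nat -> (qq q i k <= 3 * LL q i k + 3)%nat.
Proof.
  intros H Hk. pose proof (LL_gt q i k). pose proof (sh_sq q i H k Hk).
  pose proof (sh_pos q i H k Hk). specialize (H0 ltac:(lia)). nia.
Qed.

Lemma LL_le2 q i k : SH q i -> (2 <= k)%nat -> (3 * LL q i (k - 1) <= qq q i k)%nat.
Proof.
  intros H Hk. pose proof (LL_le q i (k-1)). replace (S (k-1)) with k in H0 by lia.
  pose proof (sh_pos q i H (k-1) ltac:(lia)). nia.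
Qed.

Definition blk q i n : nat :=
  epsilon (inhabits 0%nat) (fun k => (1 <= k /\ qq q i k <= n < qq q i (S k))%nat).

Lemma blk_spec q i n k : SH q i -> (1 <= k)%nat -> (qq q i k <= n < qq q i (S k))%nat ->
  blk q i n = k.
Proof.
  intros H Hk Hn. unfold blk.
  pose proof (epsilon_spec (inhabits 0%nat)
     (fun k => (1 <= k /\ qq q i k <= n < qq q i (S k))%nat) (ex_intro _ k (conj Hk Hn))) as [H1 H2].
  set (k' := epsilon _ _) in *.
  destruct (lt_eq_lt_dec k' k) as [[Hlt|Heq]|Hgt]; auto.
  - pose proof (qq_mono q i (S k') k H ltac:(lia) Hlt). lia.
  - pose proof (qq_mono q i (S k) k' H ltac:(lia) Hgt). lia.
Qed.

Definition ypt q i (p : nat -> nat) (n : nat) : Z :=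
  if (n <? qq q i 1)%nat then 0%Z
  else shiftR (p (blk q i n)) (sseq q i (blk q i n)) n.

Fixpoint Sc (y : nat -> Z) (n : nat) : Z :=
  match n with O => 0%Z | S m => (Sc y m + y (S m))%Z end.

Definition ramp (L Q P n : nat) : Z :=
  let d := ((n - P) / Q)%nat in
  (Z.of_nat (Nat.min L d) - Z.of_nat (Nat.min L (d - L)))%Z.

Lemma sseq_trit q i k n : trit (sseq q i k n).
Proof.
  unfold sseq, trit. destruct (_ && _); [|auto].
  destruct (_ && _); [auto|]. destruct (_ && _); auto.
Qed.

Lemma shiftR_trit P w n : (forall m, trit (w m)) -> trit (shiftR P w n).
Proof. intros H. unfold shiftR. destruct (_ <=? _); [unfold trit; auto|apply H]. Qed.

Lemma ypt_Pset q i p : SH q i -> (forall k, (1 <= k)%nat -> (p k <= qq q i k)%nat) ->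
  Pset q i (ypt q i p).
Proof.
  intros H Hp. split; [|split].
  - intros n _. unfold ypt. destruct (_ <? _); [unfold trit; auto|].
    apply shiftR_trit. intros; apply sseq_trit.
  - intros n Hn. unfold ypt. destruct (n <? qq q i 1) eqn:E; auto. bdes. lia.
  - intros k Hk. exists (p k). split; [auto|]. intros n Hn.
    pose proof (sh_pos q i H k Hk). pose proof (sh_g3 q i H k Hk).
    unfold ypt. destruct (n <? qq q i 1) eqn:E; bdes.
    + pose proof (qq_mono q i 1 k H ltac:(lia) Hk). lia.
    + rewrite (blk_spec q i n k H Hk ltac:(lia)). reflexivity.
Qed.


Lemma div_step m Q : (1 <= Q)%nat -> (1 <= m)%nat ->
  (m mod Q = 0 /\ m / Q = S ((m-1)/Q))%nat \/ (m mod Q <> 0 /\ m / Q = (m-1)/Q)%nat.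
Proof.
  intros HQ Hm.
  pose proof (Nat.div_mod (m-1) Q ltac:(lia)).
  pose proof (Nat.mod_upper_bound (m-1) Q ltac:(lia)).
  set (d := ((m-1)/Q)%nat) in *. set (r := ((m-1) mod Q)%nat) in *.
  destruct (Nat.eq_dec r (Q-1)).
  - left. split.
    + symmetry. apply (Nat.mod_unique m Q (S d) 0); lia.
    + symmetry. apply (Nat.div_unique m Q (S d) 0); lia.
  - right. split.
    + rewrite <- (Nat.mod_unique m Q d (S r)); lia.
    + symmetry. apply (Nat.div_unique m Q d (S r)); lia.
Qed.

Lemma ramp_step q i k P n : (1 <= qq q i k)%nat ->
  ramp (LL q i k) (qq q i k) P (S n) = (ramp (LL q i k) (qq q i k) P n + shiftR P (sseq q i k) (S n))%Z.
Proof.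
  intros HQ. unfold shiftR. destruct (S n <=? P) eqn:E; bdes.
  - unfold ramp; cbv zeta. replace (S n - P)%nat with 0%nat by lia. replace (n - P)%nat with 0%nat by lia. rewrite Z.add_0_r; reflexivity.
  - unfold ramp, sseq; cbv zeta. set (Q := qq q i k) in *. set (L := LL q i k).
    set (m := (S n - P)%nat). replace (n - P)%nat with (m - 1)%nat by lia.
    destruct (div_step m Q HQ ltac:(lia)) as [[H1 H2]|[H1 H2]].
    + rewrite H1, H2. replace (1 <=? m) with true by (symmetry; apply Nat.leb_le; lia). cbn [andb Nat.eqb].
      set (d := ((m-1)/Q)%nat).
      destruct (1 <=? S d) eqn:E1; destruct (S d <=? L) eqn:E2; cbn [andb]; bdes; try lia;
      destruct (L <? S d) eqn:E3; destruct (S d <=? 2 * L) eqn:E4; cbn [andb]; bdes; lia.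
    + rewrite H2. replace (m mod Q =? 0) with false by (symmetry; apply Nat.eqb_neq; auto).
      rewrite andb_false_r. lia.
Qed.

Lemma iter_T n y z : forall k m,
  fst (Nat.iter n Tmap (y, z)) k = y (k + n)%nat /\
  snd (Nat.iter n Tmap (y, z)) m = z (m + Sc y n)%Z.
Proof.
  induction n; intros k m.
  - simpl. rewrite Nat.add_0_r, Z.add_0_r. auto.
  - simpl Nat.iter. unfold Tmap at 1. simpl fst. simpl snd. split.
    + rewrite (proj1 (IHn (S k) 0%Z)). f_equal. lia.
    + rewrite (proj2 (IHn 0%nat (m + fst (Nat.iter n Tmap (y, z)) 1%nat)%Z)).
      rewrite (proj1 (IHn 1%nat 0%Z)). f_equal. simpl Sc. replace (1 + n)%nat with (S n) by lia. lia.
Qed.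

Lemma Sc_pre q i p n : (n < qq q i 1)%nat -> Sc (ypt q i p) n = 0%Z.
Proof.
  induction n; intros H; simpl; auto. rewrite IHn by lia.
  unfold ypt. replace (S n <? qq q i 1) with true by (symmetry; apply Nat.ltb_lt; lia). lia.
Qed.

Lemma ramp_start L Q P n : (1 <= Q)%nat -> (P <= Q)%nat -> (n + 1 <= Q)%nat -> ramp L Q P n = 0%Z.
Proof.
  intros. unfold ramp; cbv zeta. rewrite Nat.div_small by lia. simpl. lia.
Qed.

Lemma ramp_end L Q P n : (1 <= Q)%nat -> (P + 2 * L * Q <= n)%nat -> ramp L Q P n = 0%Z.
Proof.
  intros HQ H. unfold ramp; cbv zeta.
  assert (2 * L <= (n - P) / Q)%nat.
  { apply Nat.div_le_lower_bound; lia. }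
  lia.
Qed.

Lemma ramp_mid L Q P n j : (1 <= Q)%nat -> (j <= L)%nat -> (P + j * Q <= n < P + j * Q + Q)%nat ->
  ramp L Q P n = Z.of_nat j.
Proof.
  intros HQ Hj H. unfold ramp.
  cbv zeta. replace ((n - P) / Q)%nat with j.
  - lia.
  - apply (Nat.div_unique _ Q j (n - P - j * Q)); lia.
Qed.

Lemma blockfit q i k : SH q i -> (1 <= k)%nat ->
  (qq q i k + 2 * LL q i k * qq q i k + 1 <= qq q i (S k))%nat.
Proof.
  intros H Hk. pose proof (LL_le q i k). pose proof (sh_g3 q i H k Hk). nia.
Qed.

Lemma Sc_ramp q i p : SH q i -> (forall k, (1 <= k)%nat -> (p k <= qq q i k)%nat) ->
  forall n k, (1 <= k)%nat -> (qq q i k - 1 <= n <= qq q i (S k) - 1)%nat ->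
  Sc (ypt q i p) n = ramp (LL q i k) (qq q i k) (p k) n.
Proof.
  intros H Hp n. induction n; intros k Hk Hn.
  - pose proof (sh_pos q i H k Hk). lia.
  - pose proof (sh_pos q i H k Hk) as HQ. pose proof (Hp k Hk) as HPk.
    destruct (Nat.eq_dec (S n) (qq q i k - 1)) as [He|He].
    + rewrite ramp_start by lia.
      destruct (Nat.eq_dec k 1) as [->|Hk1].
      * apply Sc_pre. lia.
      * set (k' := (k - 1)%nat). assert (Ek : k = S k') by lia.
        pose proof (sh_pos q i H k' ltac:(lia)). pose proof (sh_g3 q i H k' ltac:(lia)).
        rewrite Ek in He.
        simpl Sc. rewrite (IHn k') by lia.
        assert (Hy : ypt q i p (S n) = shiftR (p k') (sseq q i k') (S n)).
        { unfold ypt. replace (S n <? qq q i 1) with false.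
          - rewrite (blk_spec q i (S n) k' H ltac:(lia) ltac:(lia)). reflexivity.
          - symmetry. apply Nat.ltb_ge. pose proof (qq_mono q i 1 k' H ltac:(lia) ltac:(lia)). lia. }
        rewrite Hy, <- ramp_step by lia.
        apply ramp_end; [lia|].
        pose proof (blockfit q i k' H ltac:(lia)). pose proof (Hp k' ltac:(lia)). lia.
    + simpl Sc. rewrite (IHn k) by lia.
      assert (Hy : ypt q i p (S n) = shiftR (p k) (sseq q i k) (S n)).
      { unfold ypt. replace (S n <? qq q i 1) with false.
        - rewrite (blk_spec q i (S n) k H Hk ltac:(lia)). reflexivity.
        - symmetry. apply Nat.ltb_ge. pose proof (qq_mono q i 1 k H ltac:(lia) ltac:(lia)). lia. }
      rewrite Hy, <- ramp_step by lia. reflexivity.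
Qed.

Local Open Scope R_scope.


Lemma LL_mono2 q i a b : SH q i -> (1 <= a)%nat -> (a <= b)%nat -> (LL q i a <= LL q i b)%nat.
Proof.
  intros H Ha Hab. induction Hab; auto.
  pose proof (LL_mono q i m H ltac:(lia)). lia.
Qed.

Definition kap q i j : nat :=
  epsilon (inhabits 0%nat) (fun k => (2 <= k /\ LL q i (k-1) < j <= LL q i k)%nat).

Lemma kap_spec q i j k : SH q i -> (2 <= k)%nat -> (LL q i (k-1) < j <= LL q i k)%nat -> kap q i j = k.
Proof.
  intros H Hk Hj. unfold kap.
  pose proof (epsilon_spec (inhabits 0%nat)
     (fun k => (2 <= k /\ LL q i (k-1) < j <= LL q i k)%nat) (ex_intro _ k (conj Hk Hj))) as [H1 H2].
  set (k' := epsilon _ _) in *.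
  destruct (lt_eq_lt_dec k' k) as [[Hlt|Heq]|Hgt]; auto.
  - pose proof (LL_mono2 q i k' (k-1) H ltac:(lia) ltac:(lia)). lia.
  - pose proof (LL_mono2 q i k (k'-1) H ltac:(lia) ltac:(lia)). lia.
Qed.

Definition Wsum q i (p : nat -> nat) (a : nat -> R) k j : R := sm a (p k + j * qq q i k)%nat (qq q i k).

Definition zf q i p a (m : Z) : Z :=
  let j := Z.to_nat m in if Rle_dec 0 (Wsum q i p a (kap q i j) j) then 1%Z else (-1)%Z.

Lemma zf_trit q i p a m : trit (zf q i p a m).
Proof. unfold zf, trit. destruct (Rle_dec _ _); auto. Qed.

Lemma sm_blocks2 h b Q len : sm h b (len * Q) = sm (fun t => sm h (b + t * Q) Q) 0 len.
Proof.
  induction len; simpl; auto.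
  replace (Q + len * Q)%nat with (len * Q + Q)%nat by lia.
  rewrite sm_split, IHlen. reflexivity.
Qed.

Lemma key_sum q i p a k len N : SH q i -> (forall k, (1 <= k)%nat -> (p k <= qq q i k)%nat) ->
  (forall n, (1 <= n)%nat -> Rabs (a n) <= 1) -> (2 <= k)%nat ->
  (LL q i (k-1) + 1 + len <= LL q i k + 1)%nat ->
  (p k + (LL q i (k-1) + 1 + len) * qq q i k <= N + 1)%nat ->
  sum1 (fun n => IZR (zf q i p a (Sc (ypt q i p) n)) * a n) N >=
  sm (fun t => Rabs (Wsum q i p a k (LL q i (k-1) + 1 + t))) 0 len - (INR N - INR (len * qq q i k)).
Proof.
  intros H Hp Ha Hk Hlen HN.
  set (g := fun n => IZR (zf q i p a (Sc (ypt q i p) n)) * a n).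
  set (Q := qq q i k) in *. set (J0 := (LL q i (k-1) + 1)%nat) in *.
  pose proof (sh_pos q i H k ltac:(lia)) as HQ.
  set (A := (p k + J0 * Q - 1)%nat).
  set (R0 := (N - A - len * Q)%nat).
  assert (HJ0 : (1 <= J0)%nat) by lia.
  assert (HA : (1 + A = p k + J0 * Q)%nat) by (unfold A; nia).
  assert (HNs : N = (A + len * Q + R0)%nat) by (unfold R0; nia).
  rewrite sum1_sm. fold g. rewrite HNs at 1.
  rewrite sm_split, sm_split.
  assert (Hg : forall n, (1 <= n)%nat -> Rabs (g n) <= 1).
  { intros n Hn. unfold g. rewrite Rabs_mult.
    assert (Rabs (IZR (zf q i p a (Sc (ypt q i p) n))) <= 1).
    { apply Rabs_le.
      destruct (zf_trit q i p a (Sc (ypt q i p) n)) as [E|[E|E]]; rewrite E;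
      simpl; lra. }
    specialize (Ha n Hn).
    assert (0 <= Rabs (a n)) by apply Rabs_pos.
    assert (0 <= Rabs (IZR (zf q i p a (Sc (ypt q i p) n)))) by apply Rabs_pos.
    nra. }
  assert (E1 : - INR A <= sm g 1 A) by (apply sm_lb; intros; apply Hg; lia).
  assert (E3 : - INR R0 <= sm g (1 + A + len * Q) R0) by (apply sm_lb; intros; apply Hg; lia).
  assert (E2 : sm g (1 + A) (len * Q) = sm (fun t => Rabs (Wsum q i p a k (J0 + t))) 0 len).
  { rewrite sm_blocks2. apply sm_ext. intros t Ht.
    assert (HL : (J0 + t <= LL q i k)%nat) by lia.
    unfold Wsum. fold Q.
    replace (1 + A + t * Q)%nat with (p k + (J0 + t) * Q)%nat by (rewrite HA; ring).
    set (W := sm a (p k + (J0 + t) * Q) Q).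
    assert (Hz : forall n, (p k + (J0 + t) * Q <= n < p k + (J0 + t) * Q + Q)%nat ->
              zf q i p a (Sc (ypt q i p) n) = if Rle_dec 0 W then 1%Z else (-1)%Z).
    { intros n Hn.
      rewrite (Sc_ramp q i p H Hp n k ltac:(lia)).
      - fold Q. rewrite (ramp_mid _ Q _ n (J0 + t)) by lia.
        unfold zf. rewrite Nat2Z.id. rewrite (kap_spec q i (J0 + t) k H Hk) by lia.
        reflexivity.
      - fold Q. pose proof (blockfit q i k H ltac:(lia)). fold Q in H0.
        pose proof (Hp k ltac:(lia)). fold Q in H1.
        assert (1 <= LL q i k)%nat by lia.
        split; [nia|]. nia. }
    rewrite (sm_ext g (fun n => IZR (if Rle_dec 0 W then 1%Z else (-1)%Z) * a n)).
    - rewrite sm_scal. fold W. destruct (Rle_dec 0 W).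
      + rewrite Rabs_right by lra. simpl. ring.
      + rewrite Rabs_left by lra. simpl. ring.
    - intros n Hn. unfold g. rewrite Hz by lia. reflexivity. }
  rewrite E2.
  assert (INR N = INR A + INR (len * Q) + INR R0) by (rewrite HNs at 1; rewrite !plus_INR; ring). rewrite Nat.add_assoc. lra.
Qed.


Definition SumP q i p a N := sum1 (fun n => IZR (zf q i p a (Sc (ypt q i p) n)) * a n) N.

Lemma sys_lemma q i a k N Qb : SH q i -> (forall n, (1 <= n)%nat -> Rabs (a n) <= 1) ->
  (2 <= k)%nat -> (qq q i k <= Qb <= qq q i k + 1)%nat -> (3 <= qq q i k)%nat ->
  (3 * N <= qq q i (S k) + 2)%nat -> (Qb * Qb + 3 * Qb <= N)%nat ->
  exists P, (P < qq q i k)%nat /\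
   forall p, (forall k', (1 <= k')%nat -> (p k' <= qq q i k')%nat) -> p k = P ->
   INR (qq q i k) * (SumP q i p a N + INR (Qb * Qb + 3 * Qb)) >=
   sm (fun n => Rabs (sm a n (qq q i k))) (Qb * Qb) (N - 3 * Qb - Qb * Qb).
Proof.
  intros H Ha Hk HQb HQ3 HN1 HN2.
  set (Q := qq q i k) in *. set (L := LL q i k). set (J0 := (LL q i (k-1) + 1)%nat).
  set (D := (N / Q)%nat).
  assert (HD1 : (D * Q <= N)%nat) by (unfold D; rewrite Nat.mul_comm; apply Nat.Div0.mul_div_le).
  assert (HD2 : (N < (D + 1) * Q)%nat).
  { unfold D. pose proof (Nat.div_mod N Q ltac:(lia)). pose proof (Nat.mod_upper_bound N Q ltac:(lia)). nia. }
  pose proof (LL_le q i k) as HL1. pose proof (LL_gt q i k ltac:(lia)) as HL2.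
  fold Q L in HL1, HL2.
  pose proof (LL_le2 q i k H Hk) as HL3. fold Q in HL3.
  pose proof (LL_mono2 q i (k-1) k H ltac:(lia) ltac:(lia)) as HL4. fold L in HL4.
  set (M := Nat.min (L + 1) (D - 1)).
  set (len := (M - J0)%nat).
  assert (HJ0Q : (J0 * Q <= Qb * Qb)%nat) by (unfold J0; nia).
  assert (HMQ : (N <= M * Q + 2 * Q)%nat).
  { unfold M. destruct (Nat.min_spec (L + 1) (D - 1)) as [[_ E]|[_ E]]; rewrite E.
    - nia.
    - assert (1 <= D)%nat by nia. replace ((D - 1) * Q)%nat with (D * Q - Q)%nat by nia. nia. }
  assert (HMQ2 : (M * Q + Q <= N)%nat).
  { unfold M. destruct (Nat.min_spec (L + 1) (D - 1)) as [[_ E]|[_ E]]; rewrite E.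
    - assert (L + 1 <= D - 1)%nat by lia. nia.
    - assert (1 <= D)%nat by nia. replace ((D - 1) * Q)%nat with (D * Q - Q)%nat by nia. nia. }
  assert (HM3 : (M <= L + 1)%nat) by (unfold M; lia).
  set (h := fun n => Rabs (sm a n Q)).
  set (F := fun P => sm (fun t => h (J0 * Q + P + t * Q)%nat) 0 len).
  destruct (sm_argmax F Q ltac:(lia)) as [P [HP HPF]].
  exists P. split; auto.
  intros p Hp HpP.
  assert (Hblk : sm F 0 Q = sm h (J0 * Q) (len * Q)) by (unfold F; apply sm_blocks).
  assert (Hks := key_sum q i p a k len N H Hp Ha Hk ltac:(unfold len, J0 in *; lia)
                   ltac:(rewrite HpP; fold J0 Q; unfold len; nia)).
  fold J0 Q in Hks.
  assert (HF : sm (fun t => Rabs (Wsum q i p a k (J0 + t))) 0 len = F P).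
  { unfold F. apply sm_ext. intros t Ht. unfold h, Wsum. fold Q. rewrite HpP.
    f_equal. f_equal. ring. }
  rewrite HF in Hks.
  assert (Hsub : sm h (Qb * Qb) (N - 3 * Qb - Qb * Qb) <= sm h (J0 * Q) (len * Q)).
  { apply sm_sub.
    - intros; unfold h; apply Rabs_pos.
    - auto.
    - unfold len. nia. }
  assert (HE : (N <= len * Q + (Qb * Qb + 3 * Qb))%nat) by (unfold len; nia).
  apply le_INR in HE. rewrite plus_INR in HE.
  unfold SumP. fold h.
  assert (0 < INR Q) by (apply lt_0_INR; lia).
  nra.
Qed.


Lemma div_le_helper a b c : 0 < c -> a <= b * c -> a / c <= b.
Proof.
  intros Hc H. apply (Rmult_le_reg_r c); auto. unfold Rdiv.
  rewrite Rmult_assoc, Rinv_l by lra. lra.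
Qed.

Lemma pair_sum a Qb N : (forall n, (1 <= n)%nat -> Rabs (a n) <= 1) -> (2 <= Qb)%nat ->
  (Qb * Qb + 3 * Qb <= N)%nat ->
  sm (fun n => Rabs (sm a n Qb)) (Qb * Qb) (N - 3 * Qb - Qb * Qb) +
  sm (fun n => Rabs (sm a n (Qb - 1))) (Qb * Qb) (N - 3 * Qb - Qb * Qb) >=
  sum1 (fun n => Rabs (a n)) N - INR (Qb * Qb + 3 * Qb).
Proof.
  intros Ha HQ HN.
  set (A := (Qb * Qb)%nat). set (l := (N - 3 * Qb - A)%nat).
  rewrite <- sm_plus.
  assert (H1 : sm (fun n => Rabs (a (n + (Qb - 1))%nat)) A l <=
               sm (fun n => Rabs (sm a n Qb) + Rabs (sm a n (Qb - 1))) A l).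
  { apply sm_le. intros n Hn.
    replace (sm a n Qb) with (sm a n (S (Qb - 1))) by (f_equal; lia). simpl sm.
    set (x := sm a n (Qb - 1)).
    set (y := a (n + (Qb - 1))%nat).
    pose proof (Rabs_triang (x + y) (- x)). rewrite Rabs_Ropp in H.
    replace (x + y + - x) with y in H by ring. lra. }
  assert (H2 : sm (fun n => Rabs (a (n + (Qb - 1))%nat)) A l =
               sm (fun n => Rabs (a n)) (A + (Qb - 1)) l).
  { rewrite sm_shift0, (sm_shift0 _ (A + (Qb - 1))). apply sm_ext. intros. f_equal. f_equal. lia. }
  rewrite sum1_sm.
  set (r := (N - (A + Qb - 2) - l)%nat).
  assert (HNs : N = (A + Qb - 2 + (l + r))%nat) by (unfold r, l, A in *; lia).
  rewrite HNs at 1. rewrite sm_split, sm_split.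
  replace (1 + (A + Qb - 2))%nat with (A + (Qb - 1))%nat by (unfold A; nia).
  assert (B1 : sm (fun n => Rabs (a n)) 1 (A + Qb - 2) <= INR (A + Qb - 2)).
  { apply sm_ub. intros. rewrite Rabs_Rabsolu. apply Ha. lia. }
  assert (B2 : sm (fun n => Rabs (a n)) (A + (Qb - 1) + l) r <= INR r).
  { apply sm_ub. intros. rewrite Rabs_Rabsolu. apply Ha. lia. }
  assert (HE : (A + Qb - 2 + r <= A + 3 * Qb)%nat) by (unfold r, l, A in *; lia).
  apply le_INR in HE. rewrite plus_INR in HE.
  lra.
Qed.

Lemma pair_lemma q i i' a k N theta :
  SH q i -> SH q i' -> qq q i' k = (qq q i k - 1)%nat -> qq q i' (S k) = (qq q i (S k) - 1)%nat ->
  (forall n, (1 <= n)%nat -> Rabs (a n) <= 1) -> (2 <= k)%nat -> (4 <= qq q i k)%nat ->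
  (3 * N <= qq q i (S k) + 1)%nat -> (qq q i k ^ 4 <= 3 * N)%nat ->
  0 < theta -> 48 <= theta * INR (qq q i k) ->
  sum1 (fun n => Rabs (a n)) N >= theta * INR N / 2 ->
  exists s, (s = i \/ s = i') /\ exists P, (P < qq q s k)%nat /\
   forall p, (forall k', (1 <= k')%nat -> (p k' <= qq q s k')%nat) -> p k = P ->
   SumP q s p a N >= theta * INR N / (16 * INR (qq q i k)).
Proof.
  intros H H' E1 E2 Ha Hk HQ4 HN1 HN2 Hth Hth2 Hsum.
  set (Qb := qq q i k) in *.
  assert (HN3 : (Qb * Qb + 3 * Qb <= N)%nat).
  { assert (Qb ^ 4 = Qb * Qb * (Qb * Qb))%nat by (simpl; ring). nia. }
  destruct (sys_lemma q i a k N Qb H Ha Hk ltac:(lia) ltac:(lia) ltac:(lia) HN3) as [P [HP HPp]].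
  destruct (sys_lemma q i' a k N Qb H' Ha Hk ltac:(lia) ltac:(lia) ltac:(lia) HN3) as [P' [HP' HPp']].
  rewrite E1 in HPp'.
  pose proof (pair_sum a Qb N Ha ltac:(lia) HN3) as Hps.
  set (T := sm (fun n => Rabs (sm a n Qb)) (Qb * Qb) (N - 3 * Qb - Qb * Qb)) in *.
  set (T' := sm (fun n => Rabs (sm a n (Qb - 1))) (Qb * Qb) (N - 3 * Qb - Qb * Qb)) in *.
  set (E := INR (Qb * Qb + 3 * Qb)) in *.
  set (X := INR Qb) in *.
  assert (HX : INR (Qb - 1) = X - 1) by (unfold X; rewrite minus_INR by lia; simpl; ring).
  rewrite HX in HPp'.
  assert (HE : E = X * X + 3 * X) by (unfold E, X; rewrite plus_INR, !mult_INR; simpl; ring).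
  assert (HX4 : 4 <= X) by (unfold X; replace 4 with (INR 4) by (simpl; ring); apply le_INR; lia).
  assert (HT : 0 <= T) by (apply sm_nonneg; intros; apply Rabs_pos).
  assert (HT' : 0 <= T') by (apply sm_nonneg; intros; apply Rabs_pos).
  assert (HN4 : X * X * X * X <= 3 * INR N).
  { unfold X. replace (INR Qb * INR Qb * INR Qb * INR Qb) with (INR (Qb ^ 4)) by (rewrite pow_INR; simpl; ring).
    replace 3 with (INR 3) by (simpl; ring). rewrite <- mult_INR. apply le_INR; lia. }
  assert (HthN : 16 * X * X * X <= theta * INR N).
  { assert (48 * (X * X * X) <= theta * X * (X * X * X)).
    { apply Rmult_le_compat_r; [|lra]. apply Rmult_le_pos; [|lra]. apply Rmult_le_pos; lra. }
    nra. }
  assert (Final : forall S, 2 * X * (S + E) >= T + T' -> S >= theta * INR N / (16 * X)).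
  { intros S HS. apply Rle_ge, div_le_helper; [lra|].
    assert (3 * theta * INR N >= 8 * E + 16 * X * E) by (rewrite HE; nra).
    nra. }
  destruct (Rle_dec (T' * X) (T * (X - 1))) as [Hc|Hc].
  - exists i. split; [auto|]. exists P. split; [auto|]. intros p Hp HpP.
    specialize (HPp p Hp HpP). change (X * (SumP q i p a N + E) >= T) in HPp. apply Final.
    assert (HXT : X * (T - T') >= T) by nra.
    assert (T >= T').
    { destruct (Rle_dec T' T); [lra|].
      assert (X * (T' - T) > 0) by (apply Rmult_lt_0_compat; lra). nra. }
    match goal with |- 2 * X * (?S + E) >= _ => replace (2 * X * (S + E)) with (2 * (X * (S + E))) by ring end.
    lra.
  - exists i'. split; [auto|]. exists P'. split; [exact HP'|]. intros p Hp HpP.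
    specialize (HPp' p Hp HpP). apply Final.
    set (S := SumP q i' p a N) in *.
    assert (HH : (X - 1) * (2 * X * (S + E)) >= (X - 1) * (T + T')) by nra.
    apply Rle_ge. apply (Rmult_le_reg_l (X - 1)); [lra|]. lra.
Qed.


Lemma q_mono (q : nat -> nat) : (forall k, (1 <= k)%nat -> (q k < q (S k))%nat) ->
  forall a b, (1 <= a)%nat -> (a < b)%nat -> (q a < q b)%nat.
Proof.
  intros H a b Ha Hab. induction Hab. apply H; lia. pose proof (H m ltac:(lia)). lia.
Qed.

Lemma q_facts (q : nat -> nat) :
  (2 <= q 1%nat)%nat ->
  (forall k, (1 <= k)%nat -> (q k < q (S k))%nat) ->
  (forall k, (1 <= k)%nat -> (q k ^ 4 + 3 * q k < q (S k))%nat) ->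
  forall j, (1 <= j)%nat ->
    (2 <= q j)%nat /\ (3 * q j + 4 <= q (S (S j)))%nat /\ (q j * q j + 1 <= q (S (S j)))%nat.
Proof.
  intros H1 Hinc Hq j Hj.
  assert (Hq2 : (2 <= q j)%nat).
  { destruct (Nat.eq_dec j 1). subst; auto. pose proof (q_mono q Hinc 1 j ltac:(lia) ltac:(lia)). lia. }
  pose proof (Hinc j Hj). pose proof (Hq (S j) ltac:(lia)).
  set (c := q j) in *. set (e := q (S j)) in *. set (d := q (S (S j))) in *.
  assert (e ^ 4 = e * e * (e * e))%nat by (simpl; ring).
  rewrite H2 in H0.
  assert (e * e >= e)%nat by nia.
  assert (e * e * (e * e) >= e * e)%nat by nia.
  assert (e * e >= (c + 1) * (c + 1))%nat by nia.
  split; auto. split; nia.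
Qed.

Lemma SH_all (q : nat -> nat) :
  (2 <= q 1%nat)%nat ->
  (forall k, (1 <= k)%nat -> (q k < q (S k))%nat) ->
  (forall k, (1 <= k)%nat -> (q k ^ 4 + 3 * q k < q (S k))%nat) ->
  forall i, (i <= 3)%nat -> SH q i.
Proof.
  intros H1 Hinc Hq i Hi.
  assert (Hq3 : forall j, (2 <= j)%nat -> (3 <= q j)%nat).
  { intros j Hj. pose proof (Hq 1%nat ltac:(lia)). pose proof (q_mono q Hinc 2 j ltac:(lia)).
    assert (q 1 ^ 4 = q 1 * q 1 * (q 1 * q 1))%nat by (simpl; ring).
    destruct (Nat.eq_dec j 2); [subst; nia|]. specialize (H0 ltac:(lia)). nia. }
  assert (E : forall k, (2 * S k = S (S (2 * k)))%nat) by (intros; lia).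
  assert (E' : forall k, (2 * S k + 1 = S (S (2 * k + 1)))%nat) by (intros; lia).
  assert (G : forall j, (2 <= j)%nat -> let c := q j in let d := q (S (S j)) in
     (2 <= c - 1 /\ 3 * (c - 1) + 3 <= d - 1 /\ (c - 1) * (c - 1) <= d - 1 /\ 2 <= c /\ 3 * c + 3 <= d /\ c * c <= d)%nat).
  { intros j Hj c d. pose proof (q_facts q H1 Hinc Hq j ltac:(lia)) as [A [B C]].
    pose proof (Hq3 j Hj). fold c d in A, B, C, H.
    assert ((c - 1) * (c - 1) <= c * c)%nat by (apply Nat.mul_le_mono; lia).
    lia. }
  destruct i as [|[|[|[|]]]]; [| | | |lia]; constructor; intros k Hk; unfold qq; rewrite ?E', ?E.
  all: try (pose proof (G (2 * k)%nat ltac:(lia)) as GG; cbv zeta in GG; lia).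
  all: try (pose proof (G (2 * k + 1)%nat ltac:(lia)) as GG; cbv zeta in GG; lia).
Qed.

Lemma good_at_b q a theta b N :
  (2 <= q 1%nat)%nat ->
  (forall i, (i <= 3)%nat -> SH q i) ->
  (forall k, (1 <= k)%nat -> (q k < q (S k))%nat) ->
  (forall k, (1 <= k)%nat -> (q k ^ 4 + 3 * q k < q (S k))%nat) ->
  (forall n, (1 <= n)%nat -> Rabs (a n) <= 1) ->
  (4 <= b)%nat -> (q (S b) <= 3 * N)%nat -> (3 * N < q (S (S b)))%nat ->
  0 < theta -> 48 <= theta * INR (q b) ->
  sum1 (fun n => Rabs (a n)) N >= theta * INR N / 2 ->
  exists s, (s <= 3)%nat /\ (s mod 2 = b mod 2)%nat /\ exists P, (P < qq q s (b / 2))%nat /\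
   forall p, (forall k', (1 <= k')%nat -> (p k' <= qq q s k')%nat) -> p (b / 2)%nat = P ->
   SumP q s p a N >= theta * INR N / (16 * INR (q b)).
Proof.
  intros Hq1 HSH Hinc Hq Ha Hb HN1 HN2 Hth Hth2 Hsum.
  assert (Hq4 : (4 <= q b)%nat).
  { pose proof (Hq 1%nat ltac:(lia)). pose proof (q_mono q Hinc 2 b ltac:(lia) ltac:(lia)).
    assert (q 1 ^ 4 = q 1 * q 1 * (q 1 * q 1))%nat by (simpl; ring). nia. }
  pose proof (Hq b ltac:(lia)) as Hqb.
  destruct (Nat.Even_or_Odd b) as [[k Hk]|[k Hk]]; subst b.
  - replace (2 * k / 2)%nat with k by (rewrite Nat.mul_comm, Nat.div_mul; lia).
    destruct (pair_lemma q 0 2 a k N theta (HSH 0%nat ltac:(lia)) (HSH 2%nat ltac:(lia))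
       eq_refl eq_refl Ha ltac:(lia)) as [s [Hs [P [HP HPp]]]]; unfold qq; auto.
    + replace (2 * S k)%nat with (S (S (2 * k))) by lia. lia.
    + lia.
    + exists s. split; [lia|]. split; [destruct Hs; subst; rewrite (Nat.mul_comm 2 k), Nat.Div0.mod_mul; reflexivity|]. exists P. auto.
  - replace ((2 * k + 1) / 2)%nat with k.
    2:{ apply (Nat.div_unique _ 2 k 1); lia. }
    destruct (pair_lemma q 1 3 a k N theta (HSH 1%nat ltac:(lia)) (HSH 3%nat ltac:(lia))
       eq_refl eq_refl Ha ltac:(lia)) as [s [Hs [P [HP HPp]]]]; unfold qq; auto.
    + replace (2 * S k + 1)%nat with (S (S (2 * k + 1))) by lia. lia.
    + lia.
    + exists s. split; [lia|]. split.
      * replace (2 * k + 1)%nat with (1 + k * 2)%nat by ring. rewrite Nat.Div0.mod_add.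
        destruct Hs; subst; reflexivity.
      * exists P. auto.
Qed.


Lemma iter_That n p0 p1 p2 p3 i :
  Nat.iter n That (p0, p1, p2, p3, i) =
  (Nat.iter n Tmap p0, Nat.iter n Tmap p1, Nat.iter n Tmap p2, Nat.iter n Tmap p3, i).
Proof. induction n; simpl; auto. rewrite IHn. reflexivity. Qed.

Lemma Xi_of q i y z : Pset q i y -> (forall m, trit (z m)) -> Xi q i (y, z).
Proof.
  intros Hy Hz m. exists (y, z). split; [exists 0%nat, y, z; auto|]. split; auto.
Qed.

Lemma fX_tuple (c : nat -> Zpt) i : (i <= 3)%nat ->
  fX (c 0%nat, c 1%nat, c 2%nat, c 3%nat, i) = IZR (snd (c i) 0%Z).
Proof. intros Hi. destruct i as [|[|[|[|]]]]; try reflexivity. lia. Qed.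

Lemma sum1_ext g h N : (forall n, g n = h n) -> sum1 g N = sum1 h N.
Proof. intros H. induction N; simpl; auto. rewrite IHN, H. reflexivity. Qed.

Lemma half_lt a b : (a mod 2 = b mod 2)%nat -> (a < b)%nat -> (a / 2 < b / 2)%nat.
Proof.
  intros H1 H2. pose proof (Nat.div_mod a 2 ltac:(lia)). pose proof (Nat.div_mod b 2 ltac:(lia)).
  pose proof (Nat.mod_upper_bound a 2 ltac:(lia)). pose proof (Nat.mod_upper_bound b 2 ltac:(lia)).
  lia.
Qed.

Lemma smono (f : nat -> nat) : (forall t, (f t < f (S t))%nat) -> forall a b, (a < b)%nat -> (f a < f b)%nat.
Proof.
  intros H a b Hab. induction Hab. apply H. pose proof (H m). lia.
Qed.

Lemma pigeon4 (c : nat -> nat) : (forall t, (c t <= 3)%nat) ->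
  exists i, (i <= 3)%nat /\ forall M, exists t, (M <= t)%nat /\ c t = i.
Proof.
  intros Hc. apply NNPP. intros Hn.
  assert (H : forall i, (i <= 3)%nat -> exists M, forall t, (M <= t)%nat -> c t <> i).
  { intros i Hi. apply NNPP. intros Hm. apply Hn. exists i. split; auto.
    intros M. apply NNPP. intros Hm2. apply Hm. exists M. intros t Ht Hct.
    apply Hm2. exists t. auto. }
  destruct (H 0%nat ltac:(lia)) as [M0 H0]. destruct (H 1%nat ltac:(lia)) as [M1 H1].
  destruct (H 2%nat ltac:(lia)) as [M2 H2]. destruct (H 3%nat ltac:(lia)) as [M3 H3].
  set (t := (M0 + M1 + M2 + M3)%nat).
  specialize (H0 t ltac:(unfold t; lia)). specialize (H1 t ltac:(unfold t; lia)).
  specialize (H2 t ltac:(unfold t; lia)). specialize (H3 t ltac:(unfold t; lia)).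
  specialize (Hc t). lia.
Qed.

Definition stF (ns : nat -> nat -> nat) (ep : nat -> nat) (N : nat -> nat) (M0 : nat) : nat -> nat :=
  fix st t := match t with O => ns 0%nat M0 | S t' => ns (S (st t')) (S (ep (N (st t')))) end.

Definition enumF (P : nat -> Prop) : nat -> nat :=
  fix u s := match s with
  | O => epsilon (inhabits 0%nat) P
  | S s' => epsilon (inhabits 0%nat) (fun t => (S (u s') <= t)%nat /\ P t) end.

Lemma enumF_S P s : enumF P (S s) =
  epsilon (inhabits 0%nat) (fun t => (S (enumF P s) <= t)%nat /\ P t).
Proof. reflexivity. Qed.

Lemma enum_spec P : (forall M, exists t, (M <= t)%nat /\ P t) ->
  forall s, P (enumF P s) /\ (enumF P s < enumF P (S s))%nat.
Proof.
  intros H s.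
  assert (H0 : forall s, P (enumF P s)).
  { intros [|s'].
    - simpl. destruct (H 0%nat) as [t [_ Ht]]. apply (epsilon_spec (inhabits 0%nat) P). eauto.
    - rewrite enumF_S. destruct (H (S (enumF P s'))) as [t Ht].
      pose proof (epsilon_spec (inhabits 0%nat) (fun t => (S (enumF P s') <= t)%nat /\ P t)
        (ex_intro _ t Ht)) as [_ HH]. exact HH. }
  split; auto. rewrite enumF_S. destruct (H (S (enumF P s))) as [t Ht].
  pose proof (epsilon_spec (inhabits 0%nat) (fun t => (S (enumF P s) <= t)%nat /\ P t)
        (ex_intro _ t Ht)). destruct H1. lia.
Qed.

Lemma epoch_exists (q : nat -> nat) X thr : (forall k, (1 <= k)%nat -> (k + 1 <= q k)%nat) ->
  (1 <= thr)%nat -> (q thr <= X)%nat -> exists m, (thr <= m)%nat /\ (q m <= X < q (S m))%nat.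
Proof.
  intros Hge Hthr HX.
  assert (G : forall d m, (thr <= m)%nat -> (q m <= X)%nat -> (X < q (m + d))%nat ->
            exists m, (thr <= m)%nat /\ (q m <= X < q (S m))%nat).
  { induction d; intros m Hm H1 H2.
    - rewrite Nat.add_0_r in H2. lia.
    - destruct (Nat.lt_ge_cases X (q (S m))).
      + exists m. auto.
      + apply (IHd (S m)); auto. replace (S m + d)%nat with (m + S d)%nat by lia. auto. }
  apply (G (X + 1)%nat thr); auto. pose proof (Hge (thr + (X + 1))%nat ltac:(lia)). lia.
Qed.


Lemma final_real S theta n Q t0 tn : (0 < theta)%R -> (0 < n)%R -> (0 < Q)%R ->
  (S >= theta * n / (16 * Q))%R -> (tn <= t0)%R -> (t0 < 1 / (16 * Q))%R -> (S / n >= theta * tn)%R.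
Proof.
  intros Hth Hn HQ HS H1 H2.
  assert (theta * n / (16 * Q) = theta * n * (1 / (16 * Q)))%R by (field; lra).
  assert (theta * n * tn <= theta * n * (1 / (16 * Q)))%R.
  { apply Rmult_le_compat_l; [nra|lra]. }
  apply Rle_ge. apply (Rmult_le_reg_r n); auto. replace (S / n * n)%R with S by (field; lra). nra.
Qed.

Theorem mainTheorem10
  (tau : nat -> R) (q : nat -> nat)
  (Htau_pos : forall n : nat, (1 <= n)%nat -> (0 < tau n)%R)
  (Htau_mono : forall n m : nat, (1 <= n <= m)%nat -> (tau m <= tau n)%R)
  (Htau_lim : Un_cv tau 0%R)
  (Hq1 : (2 <= q 1%nat)%nat)
  (Hq_inc : forall k : nat, (1 <= k)%nat -> (q k < q (S k))%nat)
  (Hq_i : forall k : nat, (1 <= k)%nat -> (q k ^ 4 + 3 * q k < q (S k))%nat)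
  (Hq_ii : forall k : nat, (1 <= k)%nat ->
     (tau ((q (S k) + 2) / 3)%nat < 1 / (16 * INR (q k)))%R)
  (a : nat -> R) (Ha : forall n : nat, (1 <= n)%nat -> (Rabs (a n) <= 1)%R)
  (N : nat -> nat) (HN : forall j : nat, (N j < N (S j))%nat)
  (theta : R) (Htheta : (0 < theta)%R)
  (Hlim : Un_cv (fun j => (sum1 (fun n => Rabs (a n)) (N j) / INR (N j))%R) theta) :
  exists (jt : nat -> nat) (x : Xpt),
    (forall t : nat, (jt t < jt (S t))%nat) /\
    inX q x /\
    (exists t0 : nat, forall t : nat, (t0 <= t)%nat ->
       (sum1 (fun n => fX (Nat.iter n That x) * a n) (N (jt t)) / INR (N (jt t))
          >= theta * tau (N (jt t)))%R) /\
    (exists c : R, (0 < c)%R /\ forall M : nat, exists N' : nat, (M < N')%nat /\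
       ((sum1 (fun n => fX (Nat.iter n That x) * a n) N' / INR N') / tau N' >= c)%R).
Proof.
  pose proof (SH_all q Hq1 Hq_inc Hq_i) as HSH.
  assert (Hqge : forall k, (1 <= k)%nat -> (k + 1 <= q k)%nat).
  { intros k Hk. induction Hk; [lia|]. pose proof (Hq_inc m ltac:(lia)). lia. }
  assert (HNge : forall j, (j <= N j)%nat).
  { induction j; [lia|]. pose proof (HN j). lia. }
  destruct (INR_unbounded (48 / theta)) as [n0 Hn0].
  set (M0 := (n0 + 6)%nat).
  assert (Hth48 : forall b, (M0 - 1 <= b)%nat -> (48 <= theta * INR (q b))%R).
  { intros b Hb. assert (INR n0 <= INR (q b))%R by (apply le_INR; pose proof (Hqge b ltac:(lia)); lia).
    assert (48 = theta * (48 / theta))%R by (field; lra). nra. }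
  destruct (Hlim (theta / 2)%R ltac:(lra)) as [j0 Hj0].
  assert (Havg : forall j, (j0 <= j)%nat -> (1 <= N j)%nat ->
     (sum1 (fun n => Rabs (a n)) (N j) >= theta * INR (N j) / 2)%R).
  { intros j Hj HNj. specialize (Hj0 j Hj). unfold R_dist in Hj0.
    set (s := sum1 (fun n => Rabs (a n)) (N j)) in *.
    assert (HNp : (0 < INR (N j))%R) by (apply lt_0_INR; lia).
    apply Rabs_def2 in Hj0. destruct Hj0 as [_ Hj0].
    assert (s = (s / INR (N j)) * INR (N j))%R by (field; lra). nra. }
  set (ep := fun n => epsilon (inhabits 0%nat) (fun m => (M0 <= m /\ q m <= 3 * n /\ 3 * n < q (S m))%nat)).
  assert (Hep : forall n thr, (M0 <= thr)%nat -> (q thr <= 3 * n)%nat ->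
            (thr <= ep n /\ q (ep n) <= 3 * n < q (S (ep n)))%nat).
  { intros n thr Hthr Hq.
    destruct (epoch_exists q (3 * n) thr Hqge ltac:(lia) Hq) as [m [Hm1 Hm2]].
    pose proof (epsilon_spec (inhabits 0%nat) (fun m => (M0 <= m /\ q m <= 3 * n /\ 3 * n < q (S m))%nat)
       (ex_intro _ m (conj (Nat.le_trans _ _ _ Hthr Hm1) Hm2))) as [E1 [E2 E3]].
    fold (ep n) in E1, E2, E3.
    assert (ep n = m).
    { destruct (lt_eq_lt_dec (ep n) m) as [[Hlt|Heq]|Hgt]; auto.
      - pose proof (q_mono q Hq_inc (S (ep n)) m ltac:(lia)). destruct (Nat.eq_dec (S (ep n)) m); subst; lia.
      - pose proof (q_mono q Hq_inc (S m) (ep n) ltac:(lia)). destruct (Nat.eq_dec (S m) (ep n)) as [e|e].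
        + rewrite <- e in E2. lia.
        + specialize (H ltac:(lia)). lia. }
    rewrite H. lia. }
  set (ns := fun lo thr => epsilon (inhabits 0%nat) (fun j => (lo <= j /\ j0 <= j /\ q thr <= 3 * N j)%nat)).
  assert (Hns : forall lo thr, (lo <= ns lo thr /\ j0 <= ns lo thr /\ q thr <= 3 * N (ns lo thr))%nat).
  { intros lo thr. apply (epsilon_spec (inhabits 0%nat) (fun j => (lo <= j /\ j0 <= j /\ q thr <= 3 * N j)%nat)).
    exists (lo + j0 + q thr)%nat. pose proof (HNge (lo + j0 + q thr)%nat). lia. }
  set (st := stF ns ep N M0).
  assert (HstS : forall t, st (S t) = ns (S (st t)) (S (ep (N (st t))))) by reflexivity.
  set (mm := fun t => ep (N (st t))).
  assert (Hst : forall t, (j0 <= st t /\ M0 <= mm t /\ q (mm t) <= 3 * N (st t) < q (S (mm t)))%nat).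
  { induction t.
    - destruct (Hns 0%nat M0) as [_ [H1 H2]]. pose proof (Hep (N (st 0%nat)) M0 ltac:(lia) H2).
      unfold mm. change (st 0%nat) with (ns 0%nat M0) in *. repeat split; lia.
    - destruct (Hns (S (st t)) (S (ep (N (st t))))) as [_ [H1 H2]].
      rewrite <- HstS in H1, H2.
      assert (M0 <= mm t)%nat by lia.
      pose proof (Hep (N (st (S t))) (S (ep (N (st t)))) ltac:(unfold mm in *; lia) H2).
      unfold mm in *. repeat split; lia. }
  assert (Hmono : forall t, (st t < st (S t) /\ mm t < mm (S t))%nat).
  { intros t. destruct (Hns (S (st t)) (S (ep (N (st t))))) as [H1 [_ H2]].
    rewrite <- HstS in H1, H2. split; [lia|].
    assert (M0 <= mm t)%nat by apply Hst.
    pose proof (Hep (N (st (S t))) (S (ep (N (st t)))) ltac:(unfold mm in *; lia) H2).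
    unfold mm in *. lia. }
  set (bb := fun t => (mm t - 1)%nat).
  set (nn := fun t => N (st t)).
  set (Good := fun t s P => (s <= 3)%nat /\ (s mod 2 = bb t mod 2)%nat /\ (P < qq q s (bb t / 2))%nat /\
     forall p, (forall k', (1 <= k')%nat -> (p k' <= qq q s k')%nat) -> p (bb t / 2)%nat = P ->
     (SumP q s p a (nn t) >= theta * INR (nn t) / (16 * INR (q (bb t))))%R).
  assert (HG : forall t, exists sP : nat * nat, Good t (fst sP) (snd sP)).
  { intros t. destruct (Hst t) as [H1 [H2 [H3 H4]]].
    assert (Hb : (S (bb t) = mm t)) by (unfold bb; lia).
    pose proof (Hqge (mm t) ltac:(lia)).
    destruct (good_at_b q a theta (bb t) (nn t) Hq1 HSH Hq_inc Hq_i Ha ltac:(unfold bb; lia)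
      ltac:(rewrite Hb; exact H3) ltac:(rewrite Hb; exact H4) Htheta ltac:(apply Hth48; unfold bb; lia)
      ltac:(apply Havg; auto; lia)) as [s [Hs1 [Hs2 [P [HP HPp]]]]].
    exists (s, P). simpl. unfold Good. auto. }
  set (ch := fun t => epsilon (inhabits (0%nat,0%nat)) (fun sP => Good t (fst sP) (snd sP))).
  assert (Hch : forall t, Good t (fst (ch t)) (snd (ch t))).
  { intros t. apply (epsilon_spec _ (fun sP => Good t (fst sP) (snd sP))). apply HG. }
  set (cl := fun t => fst (ch t)). set (Pt := fun t => snd (ch t)).
  destruct (pigeon4 cl (fun t => proj1 (Hch t))) as [i [Hi Hinf]].
  set (kb := fun t => (bb t / 2)%nat).
  assert (Hmm : forall t t', (t < t')%nat -> (mm t < mm t')%nat) by (apply smono; intros; apply Hmono).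
  assert (Hst2 : forall t t', (t < t')%nat -> (st t < st t')%nat) by (apply smono; intros; apply Hmono).
  assert (Hinj0 : forall t t', (t < t')%nat -> cl t = i -> cl t' = i -> (kb t < kb t')%nat).
  { intros t t' Hlt H1 H2. pose proof (Hmm t t' Hlt).
    pose proof (proj1 (proj2 (Hch t))) as P1. pose proof (proj1 (proj2 (Hch t'))) as P2.
    unfold cl in H1, H2. rewrite H1 in P1. rewrite H2 in P2.
    pose proof (proj1 (proj2 (Hst t))).
    apply half_lt; [congruence|]. unfold bb; lia. }
  assert (Hinj : forall t t', cl t = i -> cl t' = i -> kb t = kb t' -> t = t').
  { intros t t' H1 H2 H3. destruct (lt_eq_lt_dec t t') as [[Hlt|]|Hgt]; auto.
    - pose proof (Hinj0 t t' Hlt H1 H2). lia.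
    - pose proof (Hinj0 t' t Hgt H2 H1). lia. }
  set (pf := fun k => let t := epsilon (inhabits 0%nat) (fun t => cl t = i /\ kb t = k) in
              if (Pt t <? qq q i k)%nat then Pt t else 0%nat).
  assert (Hpf : forall k, (1 <= k)%nat -> (pf k <= qq q i k)%nat).
  { intros k _. unfold pf. cbv zeta. destruct (_ <? _) eqn:E; bdes; lia. }
  assert (Hpt : forall t, cl t = i -> pf (kb t) = Pt t).
  { intros t Ht. unfold pf. cbv zeta.
    pose proof (epsilon_spec (inhabits 0%nat) (fun t' => cl t' = i /\ kb t' = kb t)
      (ex_intro _ t (conj Ht eq_refl))) as [E1 E2].
    set (t' := epsilon _ _) in *. assert (t' = t) by (apply Hinj; auto). rewrite H.
    destruct (Pt t <? qq q i (kb t))%nat eqn:E; bdes; auto. exfalso.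
    pose proof (proj1 (proj2 (proj2 (Hch t)))) as P1. unfold cl in Ht. rewrite Ht in P1.
    unfold Pt, kb in *. lia. }
  set (u := enumF (fun t => cl t = i)).
  pose proof (enum_spec (fun t => cl t = i) Hinf) as Hu. fold u in Hu.
  set (jt := fun s => st (u s)).
  exists jt.
  set (c := fun j => if Nat.eqb j i then (ypt q i pf, zf q i pf a)
                     else (ypt q j (fun _ => 0%nat), fun _ : Z => 0%Z)).
  exists (c 0%nat, c 1%nat, c 2%nat, c 3%nat, i).
  assert (HfX : forall n, fX (Nat.iter n That (c 0%nat, c 1%nat, c 2%nat, c 3%nat, i)) =
                          IZR (zf q i pf a (Sc (ypt q i pf) n))).
  { intros n. rewrite iter_That.
    etransitivity; [exact (fX_tuple (fun j => Nat.iter n Tmap (c j)) i Hi)|].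
    cbv beta. unfold c. rewrite Nat.eqb_refl. rewrite (proj2 (iter_T n _ _ 0%nat 0%Z)). reflexivity. }
  assert (Hsum : forall M, sum1 (fun n => fX (Nat.iter n That (c 0%nat, c 1%nat, c 2%nat, c 3%nat, i)) * a n) M
                           = SumP q i pf a M).
  { intros M. unfold SumP. apply sum1_ext. intros n. rewrite HfX. reflexivity. }
  assert (HNpos : forall t, (1 <= nn t)%nat).
  { intros t. destruct (Hst t) as [H1 [H2 [H3 H4]]]. pose proof (Hqge (mm t) ltac:(lia)). unfold nn. lia. }
  assert (Hkey : forall s, (sum1 (fun n => fX (Nat.iter n That (c 0%nat, c 1%nat, c 2%nat, c 3%nat, i)) * a n)
                   (N (jt s)) / INR (N (jt s)) >= theta * tau (N (jt s)))%R).
  { intros s. rewrite Hsum. destruct (Hu s) as [Hcl _]. set (t := u s) in *.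
    change (N (jt s)) with (nn t).
    destruct (Hch t) as [_ [_ [_ HP]]]. pose proof Hcl as Hcl'. unfold cl in Hcl'. rewrite Hcl' in HP.
    specialize (HP pf Hpf (Hpt t Hcl)).
    destruct (Hst t) as [H1 [H2 [H3 H4]]].
    assert (Hb : (S (bb t) = mm t)) by (unfold bb; lia).
    pose proof (Hq_ii (bb t) ltac:(unfold bb; lia)) as Ht. rewrite Hb in Ht.
    assert (Htm : (tau (nn t) <= tau ((q (mm t) + 2) / 3)%nat)%R).
    { apply Htau_mono. split.
      - pose proof (Hqge (mm t) ltac:(lia)).
        replace 1%nat with (3 / 3)%nat by reflexivity. apply Nat.Div0.div_le_mono. lia.
      - transitivity ((3 * nn t + 2) / 3)%nat.
        + apply Nat.Div0.div_le_mono. unfold nn. lia.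
        + replace ((3 * nn t + 2) / 3)%nat with (nn t); [lia|].
          apply (Nat.div_unique _ 3 _ 2); lia. }
    pose proof (HNpos t).
    assert (0 < INR (q (bb t)))%R by (apply lt_0_INR; pose proof (Hqge (bb t) ltac:(unfold bb; lia)); lia).
    apply (final_real _ theta (INR (nn t)) (INR (q (bb t))) _ _ Htheta ltac:(apply lt_0_INR; lia) H0 HP Htm Ht). }
  split; [|split; [|split]].
  - intros s. apply Hst2. apply Hu.
  - unfold inX.
    assert (HX : forall j, (j <= 3)%nat -> Xi q j (c j)).
    { intros j Hj. unfold c. destruct (Nat.eqb j i) eqn:E.
      - apply Nat.eqb_eq in E. subst j. apply Xi_of; [apply ypt_Pset; auto|apply zf_trit].
      - apply Xi_of; [apply ypt_Pset; [apply HSH; lia| intros; lia]| intros; unfold trit; auto]. }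
    repeat split; try (apply HX; lia); auto.
  - exists 0%nat. intros s _. apply Hkey.
  - exists theta. split; auto. intros M. exists (N (jt (S M))). split.
    + assert (Hge : forall t, (t <= st t)%nat).
      { induction t; [lia|]. pose proof (Hst2 t (S t) ltac:(lia)). lia. }
      assert (Hug : forall s, (s <= u s)%nat).
      { induction s; [lia|]. pose proof (proj2 (Hu s)). lia. }
      pose proof (HNge (jt (S M))). unfold jt in *. pose proof (Hge (u (S M))). pose proof (Hug (S M)). lia.
    + specialize (Hkey (S M)).
      assert (0 < tau (N (jt (S M))))%R.
      { apply Htau_pos. pose proof (HNpos (u (S M))). unfold nn, jt in *. lia. }
      set (X := (sum1 _ _ / _)%R) in *.
      apply Rle_ge. apply (Rmult_le_reg_r (tau (N (jt (S M))))); auto.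
      unfold Rdiv. rewrite Rmult_assoc, Rinv_l by lra. lra.
Qed.
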